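(* Let $m,n,p,q\in\mathbb{R}$ with $m<0$, and let $P(t)=t^5+mt^3+nt^2+pt+q$. Set $u=\frac{2\sqrt{-m}}{\sqrt5}$, $\alpha=\frac{16n}{u^3}$, $\beta=\frac{16p}{u^4}-5$, $\gamma=\frac{16q}{u^5}$, and $f(\theta)=\alpha\cos^2\theta+\beta\cos\theta+\cos 5\theta+\gamma$. Let $N_{\mathrm{int}}$ be the number of zeros of $f$ in $[0,\pi]$ and $N_{\mathrm{ext}}$ the number of real roots of $P$ outside $[-u,u]$. Then $P(t)=0$ has exactly one real root (and two conjugate pairs of nonreal complex roots) if and only if $N_{\mathrm{int}}+N_{\mathrm{ext}}=1$. In this case one of the following holds: (a) $f$ has exactly one zero in $[0,\pi]$ and $N_{\mathrm{ext}}=0$, and the unique real root lies in $[-u,u]$; (b) $f$ has no zeros in $[0,\pi]$ and $f(\pi)>0$, and the unique real root lies in $(-\infty,-u)$; (c) $f$ has no zeros in $[0,\pi]$ and $f(0)<0$, and the unique real root lies in $(u,\infty)$.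
   Context: Note $f(0)=\alpha+\beta+1+\gamma$ and $f(\pi)=\alpha-\beta-1+\gamma$. *)

(* Defs.v *)
From Stdlib Require Import Reals List.
Open Scope R_scope.

Definition Pq (m n p q t : R) : R := t^5 + m * t^3 + n * t^2 + p * t + q.

Definition uu (m : R) : R := 2 * sqrt (- m) / sqrt 5.

Definition alpha (m n : R) : R := 16 * n / (uu m)^3.
Definition beta (m p : R) : R := 16 * p / (uu m)^4 - 5.
Definition gamma (m q : R) : R := 16 * q / (uu m)^5.

Definition ff (m n p q th : R) : R :=
  alpha m n * (cos th)^2 + beta m p * cos th + cos (5 * th) + gamma m q.

Definition card_eq (S : R -> Prop) (k : nat) : Prop :=
  exists l : list R, NoDup l /\ length l = k /\ (forall x, In x l <-> S x).

Definition Zint (m n p q : R) : R -> Prop :=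
  fun th => 0 <= th <= PI /\ ff m n p q th = 0.

Definition Zext (m n p q : R) : R -> Prop :=
  fun t => Pq m n p q t = 0 /\ ~ (- uu m <= t <= uu m).

Definition Zreal (m n p q : R) : R -> Prop :=
  fun t => Pq m n p q t = 0.

(* Main.v *)
Require Import Defs.
From Stdlib Require Import Reals List Lra Psatz.
Open Scope R_scope.

Lemma cos5 x : cos (5*x) = 16 * cos x ^5 - 20 * cos x ^3 + 5 * cos x.
Proof.
  replace (5*x) with (2*(2*x) + x) by ring.
  rewrite cos_plus, sin_2a, cos_2a_cos, (cos_2a_cos x), (sin_2a x).
  assert (H := sin2_cos2 x). unfold Rsqr in H.
  replace (sin x * sin x) with (1 - cos x * cos x) by lra.
  set (s := sin x). set (c := cos x).
  transitivity ((2 * (2 * c * c - 1) * (2 * c * c - 1) - 1) * c -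
    4 * (s*s) * c * (2*c*c-1)); [ring|].
  replace (s*s) with (1 - c*c) by (unfold s, c; lra). ring.
Qed.

Lemma cont_P m n p q : continuity (Pq m n p q).
Proof. unfold Pq. reg. Qed.

Lemma absl x : - Rabs x <= x.
Proof. pose proof (Rle_abs (-x)). rewrite Rabs_Ropp in H. lra. Qed.

Lemma bigT m n p q T : 1 + Rabs m + Rabs n + Rabs p + Rabs q <= T -> Pq m n p q T > 0.
Proof.
  intros HT. unfold Pq.
  pose proof (Rabs_pos m). pose proof (Rabs_pos n). pose proof (Rabs_pos p). pose proof (Rabs_pos q).
  pose proof (absl m). pose proof (absl n). pose proof (absl p). pose proof (absl q).
  assert (T1 : 1 <= T) by lra.
  assert (T2 : 1 <= T^2) by nra. assert (T3 : T^2 <= T^3) by (simpl; nra).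
  assert (T3' : T <= T^3) by (simpl in *; nra).
  assert (m * T^3 >= - Rabs m * T^3) by nra.
  assert (n * T^2 >= - Rabs n * T^3) by nra.
  assert (p * T >= - Rabs p * T^3) by nra.
  assert (q >= - Rabs q * T^3) by nra.
  assert (T^5 = T^2 * T^3) by ring.
  assert (T^3 >= 1) by lra.
  nra.
Qed.

Lemma bigT' m n p q T : 1 + Rabs m + Rabs n + Rabs p + Rabs q <= T -> Pq m n p q (-T) < 0.
Proof.
  intros HT. assert (H := bigT m (-n) p (-q) T). rewrite !Rabs_Ropp in H.
  specialize (H HT). unfold Pq in *. nra.
Qed.

Lemma u_pos m : m < 0 -> uu m > 0.
Proof.
  intro. unfold uu. assert (sqrt (-m) > 0) by (apply sqrt_lt_R0; lra).
  assert (sqrt 5 > 0) by (apply sqrt_lt_R0; lra).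
  apply Rdiv_lt_0_compat; lra.
Qed.

Lemma u_sq m : m < 0 -> (uu m)^2 = -4*m/5.
Proof.
  intro. unfold uu. unfold Rdiv.
  replace ((2 * sqrt (- m) * / sqrt 5) ^ 2) with (4 * (sqrt (-m) * sqrt (-m)) * / (sqrt 5 * sqrt 5)).
  2:{ field. apply Rgt_not_eq, sqrt_lt_R0; lra. }
  rewrite !sqrt_sqrt; lra.
Qed.

Lemma ffP m n p q th : m < 0 -> ff m n p q th = 16 / (uu m)^5 * Pq m n p q (uu m * cos th).
Proof.
  intro hm. pose proof (u_pos m hm). pose proof (u_sq m hm).
  unfold ff, alpha, beta, gamma, Pq. rewrite cos5.
  assert (m = - 5/4 * uu m ^2) by lra.
  set (u := uu m) in *. rewrite H1. field. lra.
Qed.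

Lemma ff0 m n p q th : m < 0 -> (ff m n p q th = 0 <-> Pq m n p q (uu m * cos th) = 0).
Proof.
  intro hm. rewrite ffP by auto. pose proof (u_pos m hm).
  assert (16 / uu m ^5 > 0) by (apply Rdiv_lt_0_compat; [lra| apply pow_lt; lra]).
  split; intro. destruct (Rmult_integral _ _ H1); lra. rewrite H1; ring.
Qed.

Lemma card1 (S : R -> Prop) : card_eq S 1 <-> exists r, forall x, S x <-> x = r.
Proof.
  split.
  - intros [l [_ [hl hS]]]. destruct l as [|r [|]]; simpl in hl; try discriminate.
    exists r. intro x. rewrite <- hS. simpl. split; [intros [->|[]]; auto | intros ->; auto].
  - intros [r hr]. exists (r :: nil). split; [constructor; [intros []|constructor]|].
    split; [reflexivity|]. intro x. rewrite hr. simpl. split; [intros [->|[]]; auto | intros ->; auto].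
Qed.

Lemma card0 (S : R -> Prop) : card_eq S 0 <-> forall x, ~ S x.
Proof.
  split.
  - intros [l [_ [hl hS]]]. destruct l; simpl in hl; try discriminate. intros x hx. apply hS in hx. exact hx.
  - intros h. exists nil. split; [constructor|]. split; [reflexivity|]. intro x. simpl. split; [intros []|apply h].
Qed.

Lemma acos_pt m x : m < 0 -> - uu m <= x <= uu m ->
  0 <= acos (x / uu m) <= PI /\ uu m * cos (acos (x / uu m)) = x.
Proof.
  intros hm hx. pose proof (u_pos m hm). split. apply acos_bound.
  rewrite cos_acos. field. lra.
  split. apply Rmult_le_reg_r with (uu m); [lra|]. unfold Rdiv. rewrite Rmult_assoc, Rinv_l; lra.
  apply Rmult_le_reg_r with (uu m); [lra|]. unfold Rdiv. rewrite Rmult_assoc, Rinv_l; lra.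
Qed.

Lemma ucos_b m th : m < 0 -> - uu m <= uu m * cos th <= uu m.
Proof. intro hm. pose proof (u_pos m hm). pose proof (COS_bound th). nra. Qed.

Lemma ucos_inj m a b : m < 0 -> 0 <= a <= PI -> 0 <= b <= PI -> uu m * cos a = uu m * cos b -> a = b.
Proof.
  intros hm ha hb h. pose proof (u_pos m hm). apply cos_inj; auto.
  apply Rmult_eq_reg_l with (uu m); lra.
Qed.

Lemma case_in m n p q r : m < 0 -> (forall x, Zreal m n p q x <-> x = r) -> - uu m <= r <= uu m ->
  card_eq (Zint m n p q) 1 /\ card_eq (Zext m n p q) 0.
Proof.
  intros hm hr hb. destruct (acos_pt m r hm hb) as [h1 h2]. split.
  - apply card1. exists (acos (r / uu m)). intro x. unfold Zint. rewrite ff0 by auto. split.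
    + intros [hx hP]. apply hr in hP. apply (ucos_inj m); auto. lra.
    + intros ->. split; auto. apply hr. auto.
  - apply card0. intros x [hx hn]. apply hr in hx. subst. tauto.
Qed.

Lemma case_out m n p q r : m < 0 -> (forall x, Zreal m n p q x <-> x = r) -> ~ (- uu m <= r <= uu m) ->
  card_eq (Zint m n p q) 0 /\ card_eq (Zext m n p q) 1.
Proof.
  intros hm hr hb. split.
  - apply card0. intros x [hx hP]. rewrite ff0 in hP by auto. apply hr in hP.
    apply hb. rewrite <- hP. apply ucos_b; auto.
  - apply card1. exists r. intro x. unfold Zext. split.
    + intros [h _]. apply hr. exact h.
    + intros ->. split; auto. apply hr. auto.
Qed.

Theorem theorem3 (m n p q : R) (hm : m < 0) :
  (card_eq (Zreal m n p q) 1 <->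
     exists Nint Next : nat,
       card_eq (Zint m n p q) Nint /\ card_eq (Zext m n p q) Next /\
       (Nint + Next = 1)%nat) /\
  (card_eq (Zreal m n p q) 1 ->
     (card_eq (Zint m n p q) 1 /\ card_eq (Zext m n p q) 0 /\
        (forall t, Pq m n p q t = 0 -> - uu m <= t <= uu m))
     \/
     (card_eq (Zint m n p q) 0 /\ ff m n p q PI > 0 /\
        (forall t, Pq m n p q t = 0 -> t < - uu m))
     \/
     (card_eq (Zint m n p q) 0 /\ ff m n p q 0 < 0 /\
        (forall t, Pq m n p q t = 0 -> uu m < t))).
Proof.
  pose proof (u_pos m hm) as hu.
  split; [split|].
  - intros H. apply card1 in H. destruct H as [r hr].
    destruct (Rle_dec (- uu m) r); [destruct (Rle_dec r (uu m))|].
    + destruct (case_in m n p q r hm hr) as [h1 h2]. lra. exists 1%nat, 0%nat. auto.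
    + destruct (case_out m n p q r hm hr) as [h1 h2]. lra. exists 0%nat, 1%nat. auto.
    + destruct (case_out m n p q r hm hr) as [h1 h2]. lra. exists 0%nat, 1%nat. auto.
  - intros [Ni [Ne [h1 [h2 h3]]]]. apply card1.
    destruct Ni as [|[|]]; destruct Ne as [|[|]]; simpl in h3; try discriminate.
    + pose proof (proj1 (card0 _) h1) as h1'. clear h1. rename h1' into h1. apply (proj1 (card1 _)) in h2. destruct h2 as [r hr]. exists r. intro x. split.
      * intro hx. destruct (Rle_dec (- uu m) x); [destruct (Rle_dec x (uu m))|].
        -- exfalso. destruct (acos_pt m x hm) as [a1 a2]. lra. apply (h1 (acos (x / uu m))).
           split; auto. rewrite ff0, a2; auto.
        -- apply hr. split; auto. lra.
        -- apply hr. split; auto. lra.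
      * intro hx. apply hr in hx. apply hx.
    + apply (proj1 (card1 _)) in h1. pose proof (proj1 (card0 _) h2) as h2'. clear h2. rename h2' into h2. destruct h1 as [th hth]. exists (uu m * cos th). intro x. split.
      * intro hx. destruct (Rle_dec (- uu m) x); [destruct (Rle_dec x (uu m))|].
        -- destruct (acos_pt m x hm) as [a1 a2]. lra.
           assert (acos (x / uu m) = th). { apply hth. split; auto. rewrite ff0, a2; auto. }
           rewrite <- H, a2. reflexivity.
        -- exfalso. apply (h2 x). split; auto. lra.
        -- exfalso. apply (h2 x). split; auto. lra.
      * intros ->. assert (Zint m n p q th) by (apply hth; auto). destruct H as [_ H].
        rewrite ff0 in H; auto.
  - intros H. apply card1 in H. destruct H as [r hr].
    set (T := 1 + Rabs m + Rabs n + Rabs p + Rabs q + uu m).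
    assert (hT : 1 + Rabs m + Rabs n + Rabs p + Rabs q <= T) by (unfold T; lra).
    pose proof (Rabs_pos m). pose proof (Rabs_pos n). pose proof (Rabs_pos p). pose proof (Rabs_pos q).
    destruct (Rle_dec (- uu m) r); [destruct (Rle_dec r (uu m))|].
    + left. destruct (case_in m n p q r hm hr) as [h1 h2]. lra. split; auto. split; auto.
      intros t ht. apply hr in ht. subst. lra.
    + right; right. destruct (case_out m n p q r hm hr) as [h1 h2]. lra. split; auto. split.
      * rewrite ffP, cos_0, Rmult_1_r by auto.
        assert (Pq m n p q (uu m) < 0).
        { destruct (Rtotal_order (Pq m n p q (uu m)) 0) as [|[|]]; auto.
          - exfalso. assert (uu m = r) by (apply hr; auto). lra.
          - exfalso. destruct (IVT (Pq m n p q) (-T) (uu m) (cont_P m n p q)) as [z [hz1 hz2]].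
            unfold T; lra. apply bigT'; auto. auto.
            assert (z = r) by (apply hr; auto). lra. }
        assert (16 / uu m ^5 > 0) by (apply Rdiv_lt_0_compat; [lra| apply pow_lt; lra]). nra.
      * intros t ht. apply hr in ht. lra.
    + right; left. destruct (case_out m n p q r hm hr) as [h1 h2]. lra. split; auto. split.
      * rewrite ffP, cos_PI by auto. replace (uu m * -1) with (- uu m) by ring.
        assert (Pq m n p q (- uu m) > 0).
        { destruct (Rtotal_order (Pq m n p q (- uu m)) 0) as [|[|]]; auto.
          - exfalso. destruct (IVT (Pq m n p q) (- uu m) T (cont_P m n p q)) as [z [hz1 hz2]].
            unfold T; lra. auto. apply bigT; auto.
            assert (z = r) by (apply hr; auto). lra.
          - exfalso. assert (- uu m = r) by (apply hr; auto). lra. }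
        assert (16 / uu m ^5 > 0) by (apply Rdiv_lt_0_compat; [lra| apply pow_lt; lra]). nra.
      * intros t ht. apply hr in ht. lra.
Qed.
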